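(* Let $f:(0,\infty)\to(0,\infty)$ be a function which is constant on the interval $(0,4)$ and such that, for some positive real number $K$, $f(x)=K\left(\frac{x}{2}-1\right)f\left(\frac{x}{2}-1\right)$ for all $x\ge4$. Then there exists a positive real number $c$ such that $f(x)>x^{\log_2(x)/2-c}$ for every sufficiently large real number $x$. *)

(* Defs.v *)
From Stdlib Require Export Reals.
Open Scope R_scope.

Definition log2 (x : R) : R := ln x / ln 2.

(* Main.v *)
Require Import Defs.
From Stdlib Require Import Reals Lra ZArith.
Open Scope R_scope.

Lemma exp_le' (x y : R) : x <= y -> exp x <= exp y.
Proof. intros H. destruct H as [H|H]; [left; apply exp_increasing; exact H| subst; lra]. Qed.

Lemma ln_div' (x y : R) : 0 < x -> 0 < y -> ln (x / y) = ln x - ln y.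
Proof. intros Hx Hy. assert (E : x = x / y * y) by (field; lra).
  rewrite E at 2. rewrite ln_mult; [ring | apply Rdiv_lt_0_compat; lra | lra]. Qed.

Theorem lemma8p6 (f : R -> R) (K : R) :
  (forall x, 0 < x -> 0 < f x) ->
  (exists C, forall x, 0 < x < 4 -> f x = C) ->
  0 < K ->
  (forall x, 4 <= x -> f x = K * (x / 2 - 1) * f (x / 2 - 1)) ->
  exists c, 0 < c /\
    exists X, forall x, X <= x -> f x > Rpower x (log2 x / 2 - c).
Proof.
  intros fpos [C HC] HK Hrec.
  set (L := ln 2).
  assert (HL : 0 < L) by (unfold L; rewrite <- ln_1; apply ln_increasing; lra).
  assert (HCp : 0 < C) by (rewrite <- (HC 1) by lra; apply fpos; lra).
  set (a := Rabs (ln 6 - ln K - L/2) / L).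
  assert (Ha : a * L >= ln 6 - ln K - L/2).
  { unfold a. replace (Rabs (ln 6 - ln K - L/2) / L * L) with (Rabs (ln 6 - ln K - L/2)) by (field; lra). pose proof (Rle_abs (ln 6 - ln K - L/2)). lra. }
  assert (Ha0 : 0 <= a) by (unfold a; unfold Rdiv; apply Rmult_le_pos; [apply Rabs_pos | left; apply Rinv_0_lt_compat; exact HL]).
  set (b := ln C - (ln 6)^2/(2*L)).
  set (h := fun x => ln (x+2) ^ 2 / (2*L) - a * ln (x+2)).
  assert (Hmain : forall N : nat, forall x, 0 < x < 4 + INR N -> f x >= exp (b + h x)).
  { induction N as [|N IH]; intros x [Hx1 Hx2].
    - simpl in Hx2. rewrite HC by lra. rewrite <- (exp_ln C) at 1 by lra.
      apply Rle_ge. apply exp_le'. unfold b, h.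
      assert (0 < ln (x+2)) by (rewrite <- ln_1; apply ln_increasing; lra).
      assert (ln (x+2) < ln 6) by (apply ln_increasing; lra).
      assert (ln (x+2)^2 <= ln 6 ^2) by nra.
      assert (ln (x+2)^2/(2*L) <= ln 6 ^2/(2*L)).
      { unfold Rdiv. apply Rmult_le_compat_r; [left; apply Rinv_0_lt_compat; lra| lra]. }
      nra.
    - destruct (Rlt_or_le x 4) as [Hx4 | Hx4].
      + apply IH. split; [lra|]. pose proof (pos_INR N). lra.
      + rewrite S_INR in Hx2. pose proof (pos_INR N).
        assert (Hy := IH (x/2-1) ltac:(split; lra)).
        rewrite Hrec by lra.
        set (y := x/2-1) in *.
        set (u := ln (x+2)).
        assert (Hu : ln (y+2) = u - L).
        { unfold y, u, L. replace (x/2-1+2) with ((x+2)/2) by field.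
          rewrite ln_div' by lra. reflexivity. }
        assert (Hly : ln y >= u - ln 6).
        { unfold u. rewrite <- ln_div' by lra. apply Rle_ge.
          destruct (Req_dec x 4) as [E|E].
          { right. unfold y. rewrite E. f_equal. field. }
          left; apply ln_increasing; unfold y; [apply Rdiv_lt_0_compat|]; lra. }
        assert (HKy : K * y = exp (ln K + ln y)).
        { rewrite exp_plus, !exp_ln; unfold y; lra. }
        rewrite HKy.
        apply Rle_ge. apply Rle_trans with (exp (ln K + ln y) * exp (b + h y)).
        * rewrite <- exp_plus. apply exp_le'. unfold h. fold u. rewrite Hu.
          assert (E : (u - L) ^ 2 / (2 * L) = u^2/(2*L) - u + L/2) by (field; lra).
          rewrite E. lra.
        * apply Rmult_le_compat_l; [left; apply exp_pos | lra]. }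
  assert (Hall : forall x, 0 < x -> f x >= exp (b + h x)).
  { intros x Hx. destruct (archimed x) as [H1 _].
    assert (Hup : (0 <= up x)%Z).
    { apply le_IZR. lra. }
    apply (Hmain (Z.to_nat (up x))). rewrite INR_IZR_INZ, Z2Nat.id by exact Hup. lra. }
  exists (a + 1). split; [lra|].
  set (d := Rabs (a * ln 3 - b) + 1).
  exists (exp d). intros x Hx.
  assert (Hx0 : 0 < x) by (pose proof (exp_pos d); lra).
  assert (Hd : d <= ln x) by (rewrite <- (ln_exp d); destruct (Req_dec (exp d) x) as [E|E];
     [rewrite E; lra | left; apply ln_increasing; [apply exp_pos | lra]]).
  pose proof (Rle_abs (a * ln 3 - b)).
  assert (Hd1 : 1 <= d) by (unfold d; pose proof (Rabs_pos (a * ln 3 - b)); lra).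
  set (v := ln x) in *.
  set (u := ln (x+2)).
  assert (Huv : v <= u) by (left; apply ln_increasing; lra).
  assert (Huv2 : u <= ln 3 + v).
  { unfold u, v. rewrite <- ln_mult by lra.
    destruct (Req_dec (x+2) (3*x)) as [E|E]; [rewrite E; lra|].
    left; apply ln_increasing; try lra.
    assert (1 <= x).
    { rewrite <- (exp_ln x) by lra. rewrite <- exp_0. apply exp_le'. fold v. lra. }
    lra. }
  unfold Rgt. apply Rlt_le_trans with (exp (b + h x)); [| apply Rge_le, Hall; lra].
  unfold Rpower. apply exp_increasing. unfold log2, h. fold L. fold u. fold v.
  assert (v^2 <= u^2) by nra.
  assert (v^2/(2*L) <= u^2/(2*L)).
  { unfold Rdiv. apply Rmult_le_compat_r; [left; apply Rinv_0_lt_compat; lra| lra]. }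
  assert (E : (v / L / 2 - (a + 1)) * v = v^2/(2*L) - a*v - v) by (field; lra).
  assert (a * u <= a * (ln 3 + v)) by (apply Rmult_le_compat_l; lra).
  assert (d = Rabs (a * ln 3 - b) + 1) by reflexivity.
  rewrite E. lra.
Qed.
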